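(* Let $M$ and $N$ be $n$-manifolds with bounded geometry and let $(f_j)$ be a sequence of $R$-uniformly $k$-to-one $L$-LQ-mappings $M\to N$ converging locally uniformly to a continuous mapping $f\colon M\to N$. Then $f$ is an $R$-uniformly $k$-to-one $L$-LQ-mapping.
   Context: A metric manifold $M$ has bounded geometry if it is a complete length space and there exist $C\ge1$, $R_0>0$ such that for every $x\in M$ there is a $C$-bilipschitz map $B_M(x,R_0)\to B_{\mathbb{R}^n}(0,R_0)$; $B_X(x,r)$ denotes the open ball. A map $f\colon M\to N$ is an $L$-LQ-mapping if $B_N(f(x),L^{-1}r)\subset f(B_M(x,r))\subset B_N(f(x),Lr)$ for all $x\in M$, $r>0$. A map $f\colon X\to Y$ is $R$-uniformly $k$-to-one if $\#\big(f^{-1}\{f(x)\}\cap B_X(x,R)\big)\le k$ for all $x\in X$. *)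

(* Defs.v *)
From Stdlib Require Import Reals Lra List Sorted.
Import ListNotations.
Open Scope R_scope.

Definition is_metric {X : Type} (d : X -> X -> R) : Prop :=
  (forall x y, 0 <= d x y) /\
  (forall x y, d x y = 0 <-> x = y) /\
  (forall x y, d x y = d y x) /\
  (forall x y z, d x z <= d x y + d y z).

Definition ball {X : Type} (d : X -> X -> R) (x : X) (r : R) (y : X) : Prop :=
  d x y < r.

Definition complete {X : Type} (d : X -> X -> R) : Prop :=
  forall u : nat -> X,
    (forall eps, 0 < eps -> exists N, forall p q, (N <= p)%nat -> (N <= q)%nat ->
        d (u p) (u q) < eps) ->
    exists l, forall eps, 0 < eps -> exists N, forall p, (N <= p)%nat -> d (u p) l < eps.

Fixpoint chain_length {X : Type} (d : X -> X -> R) (gamma : R -> X) (ts : list R) : R :=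
  match ts with
  | t1 :: ((t2 :: _) as rest) => d (gamma t1) (gamma t2) + chain_length d gamma rest
  | _ => 0
  end.

Definition path_continuous {X : Type} (d : X -> X -> R) (gamma : R -> X) : Prop :=
  forall t, 0 <= t <= 1 -> forall eps, 0 < eps -> exists delta, 0 < delta /\
    forall s, 0 <= s <= 1 -> Rabs (s - t) < delta -> d (gamma t) (gamma s) < eps.

Definition path_length_le {X : Type} (d : X -> X -> R) (gamma : R -> X) (Lmax : R) : Prop :=
  forall ts : list R, Sorted Rle ts -> Forall (fun t => 0 <= t <= 1) ts ->
    chain_length d gamma ts <= Lmax.

(** Length space: d x y is the infimum of lengths of continuous paths from x to y
    (lengths are always >= d x y, so it suffices to approximate from above). *)
Definition length_space {X : Type} (d : X -> X -> R) : Prop :=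
  forall x y eps, 0 < eps -> exists gamma : R -> X,
    path_continuous d gamma /\ gamma 0 = x /\ gamma 1 = y /\
    path_length_le d gamma (d x y + eps).

Definition Rn (n : nat) : Type := {v : nat -> R | forall i, (n <= i)%nat -> v i = 0}.

Fixpoint sum_lt (n : nat) (f : nat -> R) : R :=
  match n with
  | O => 0
  | S m => sum_lt m f + f m
  end.

Definition eucl_dist (n : nat) (v w : Rn n) : R :=
  sqrt (sum_lt n (fun i => (proj1_sig v i - proj1_sig w i) ^ 2)).

Definition eucl_norm (n : nat) (v : Rn n) : R :=
  sqrt (sum_lt n (fun i => (proj1_sig v i) ^ 2)).

Definition bilip_ball_chart {X : Type} (d : X -> X -> R) (n : nat) (C r0 : R) (x : X) : Prop :=
  exists phi : X -> Rn n,
    (forall y z, ball d x r0 y -> ball d x r0 z ->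
       / C * d y z <= eucl_dist n (phi y) (phi z) /\
       eucl_dist n (phi y) (phi z) <= C * d y z) /\
    (forall y, ball d x r0 y -> eucl_norm n (phi y) < r0) /\
    (forall v : Rn n, eucl_norm n v < r0 -> exists y, ball d x r0 y /\ phi y = v).

Definition bounded_geometry {X : Type} (d : X -> X -> R) (n : nat) : Prop :=
  is_metric d /\ complete d /\ length_space d /\
  exists C r0, 1 <= C /\ 0 < r0 /\ forall x, bilip_ball_chart d n C r0 x.

Definition LQ_map {X Y : Type} (dX : X -> X -> R) (dY : Y -> Y -> R) (L : R) (f : X -> Y) : Prop :=
  forall x r, 0 < r ->
    (forall z, ball dY (f x) (/ L * r) z -> exists y, ball dX x r y /\ f y = z) /\
    (forall y, ball dX x r y -> ball dY (f x) (L * r) (f y)).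

Definition unif_k_to_one {X Y : Type} (dX : X -> X -> R) (Rad : R) (k : nat) (f : X -> Y) : Prop :=
  forall x (l : list X), NoDup l ->
    (forall y, In y l -> f y = f x /\ ball dX x Rad y) -> (length l <= k)%nat.

Definition continuous_map {X Y : Type} (dX : X -> X -> R) (dY : Y -> Y -> R) (f : X -> Y) : Prop :=
  forall x eps, 0 < eps -> exists delta, 0 < delta /\
    forall y, dX x y < delta -> dY (f x) (f y) < eps.

Definition loc_unif_conv {X Y : Type} (dX : X -> X -> R) (dY : Y -> Y -> R)
    (fs : nat -> X -> Y) (f : X -> Y) : Prop :=
  forall x, exists r, 0 < r /\ forall eps, 0 < eps -> exists J, forall j, (J <= j)%nat ->
    forall y, dX x y < r -> dY (fs j y) (f y) < eps.

(* Main.v *)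
Require Import Defs.
From Stdlib Require Import Reals Lra Lia List Sorted Classical ClassicalEpsilon.
Import ListNotations.
Open Scope R_scope.

Lemma met_tri {X} (d : X->X->R) (H : is_metric d) x y z : d x z <= d x y + d y z.
Proof. destruct H as (_&_&_&H). apply H. Qed.
Lemma met_sym {X} (d : X->X->R) (H : is_metric d) x y : d x y = d y x.
Proof. destruct H as (_&_&H&_). apply H. Qed.
Lemma met_pos {X} (d : X->X->R) (H : is_metric d) x y : 0 <= d x y.
Proof. destruct H as (H&_&_&_). apply H. Qed.
Lemma met_refl {X} (d : X->X->R) (H : is_metric d) x : d x x = 0.
Proof. destruct H as (_&H&_&_). apply H. reflexivity. Qed.
Lemma met_eq {X} (d : X->X->R) (H : is_metric d) x y : d x y = 0 -> x = y.
Proof. destruct H as (_&H&_&_). apply H. Qed.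

Lemma small_inv (t : R) : 0 < t -> exists N : nat, / INR (S N) < t.
Proof.
  intros ht. destruct (archimed_cor1 t ht) as (N & H1 & H2).
  exists (pred N). rewrite Nat.succ_pred_pos; auto.
Qed.

Lemma le_eps (a b k : R) : 0 < k -> (forall eps, 0 < eps -> a <= b + k * eps) -> a <= b.
Proof.
  intros hk H. destruct (Rle_or_lt a b) as [h|h]; auto.
  assert (he : 0 < (a - b) / (2 * k)).
  { unfold Rdiv. apply Rmult_lt_0_compat. lra. apply Rinv_0_lt_compat. lra. }
  specialize (H _ he). assert (k * ((a - b) / (2 * k)) = (a-b)/2) by (field; lra). lra.
Qed.

Lemma ekeland {X} (d : X->X->R) (phi : X -> R) (c : R) (x0 : X) :
  is_metric d -> complete d -> 0 < c -> (forall y, 0 <= phi y) ->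
  (forall y eps, 0 < eps -> exists delta, 0 < delta /\
      forall w, d y w < delta -> Rabs (phi w - phi y) < eps) ->
  exists ys, phi ys + c * d x0 ys <= phi x0 /\ forall w, phi ys <= phi w + c * d ys w.
Proof.
  intros Hm Hc hc Hpos Hcont.
  set (S := fun y w => phi w + c * d y w <= phi y).
  assert (Srefl : forall y, S y y).
  { intro y. unfold S. rewrite met_refl by auto. lra. }
  assert (Strans : forall y v w, S y v -> S v w -> S y w).
  { unfold S. intros y v w h1 h2. pose proof (met_tri d Hm y v w).
    assert (c * d y w <= c * d y v + c * d v w) by nra. lra. }
  assert (step : forall (n : nat) y, exists w, S y w /\
             forall v, S y v -> phi w <= phi v + / INR (Datatypes.S n)).
  { intros n y.
    set (E := fun t => exists w, S y w /\ t = - phi w).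
    assert (Eb : bound E).
    { exists 0. intros t (w & _ & ->). specialize (Hpos w). lra. }
    assert (Ene : exists t, E t) by (exists (- phi y); exists y; split; auto).
    destruct (completeness E Eb Ene) as (m & Hub & Hlub).
    assert (he : 0 < / INR (Datatypes.S n)).
    { apply Rinv_0_lt_compat. apply lt_0_INR. lia. }
    destruct (classic (exists w, S y w /\ m - / INR (Datatypes.S n) < - phi w)) as [(w&h1&h2)|hn].
    - exists w. split; auto. intros v hv.
      assert (- phi v <= m) by (apply Hub; exists v; auto). lra.
    - exfalso. assert (m <= m - / INR (Datatypes.S n)); [|lra].
      apply Hlub. intros t (w & hw & ->).
      destruct (Rle_or_lt (- phi w) (m - / INR (Datatypes.S n))) as [h|h]; auto.
      exfalso. apply hn. exists w; auto. }
  assert (step' : forall (n : nat) y, {w | S y w /\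
             forall v, S y v -> phi w <= phi v + / INR (Datatypes.S n)}).
  { intros n y. apply constructive_indefinite_description. apply step. }
  set (u := nat_rect (fun _ => X) x0 (fun n y => proj1_sig (step' n y))).
  assert (uS : forall n, u (Datatypes.S n) = proj1_sig (step' n (u n))) by reflexivity.
  assert (A : forall n, S (u n) (u (Datatypes.S n)) /\
     forall v, S (u n) v -> phi (u (Datatypes.S n)) <= phi v + / INR (Datatypes.S n)).
  { intro n. rewrite uS. apply (proj2_sig (step' n (u n))). }
  assert (B : forall n m, (n <= m)%nat -> S (u n) (u m)).
  { intros n m h. induction h. apply Srefl. eapply Strans; eauto. apply A. }
  assert (C : forall n v, S (u (Datatypes.S n)) v -> c * d (u (Datatypes.S n)) v <= / INR (Datatypes.S n)).
  { intros n v hv. destruct (A n) as [h1 h2].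
    specialize (h2 v (Strans _ _ _ h1 hv)). unfold S in hv. lra. }
  assert (Cau : forall eps, 0 < eps -> exists N, forall p q, (N <= p)%nat -> (N <= q)%nat ->
        d (u p) (u q) < eps).
  { intros eps he. destruct (small_inv (c * eps / 3)) as (N & hN).
    { unfold Rdiv. apply Rmult_lt_0_compat. nra. lra. }
    exists (Datatypes.S N). intros p q hp hq.
    pose proof (C N _ (B _ _ hp)). pose proof (C N _ (B _ _ hq)).
    pose proof (met_tri d Hm (u p) (u (Datatypes.S N)) (u q)).
    rewrite (met_sym d Hm (u p) (u (Datatypes.S N))) in H1.
    assert (c * d (u p) (u q) <= 2 * / INR (Datatypes.S N)).
    { assert (c * d (u p) (u q) <= c * (d (u (Datatypes.S N)) (u p) + d (u (Datatypes.S N)) (u q))).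
      { apply Rmult_le_compat_l; lra. } rewrite Rmult_plus_distr_l in H2. lra. }
    assert (0 < c * eps) by nra. assert (c * d (u p) (u q) < c * eps) by lra.
    apply Rmult_lt_reg_l with c; auto. }
  destruct (Hc u Cau) as (l & Hl).
  assert (E : forall n, S (u n) l).
  { intro n. unfold S. apply (le_eps _ _ (1 + c)). lra.
    intros eps he. destruct (Hcont l eps he) as (delta & hd & Hd).
    destruct (Hl (Rmin delta eps)) as (N & HN). apply Rmin_pos; auto.
    pose proof (HN (max N n) (Nat.le_max_l _ _)) as h.
    set (p := max N n) in *.
    pose proof (Rmin_l delta eps). pose proof (Rmin_r delta eps).
    specialize (Hd (u p)). rewrite met_sym in Hd by auto.
    assert (Rabs (phi (u p) - phi l) < eps) by (apply Hd; lra).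
    pose proof (B n p (Nat.le_max_r _ _)) as hB. unfold S in hB.
    pose proof (met_tri d Hm (u n) (u p) l).
    apply Rabs_def2 in H1. nra. }
  exists l. split.
  - apply (E 0%nat).
  - intros w. destruct (Rle_or_lt (phi l) (phi w + c * d l w)) as [h|h]; auto.
    exfalso.
    assert (hS : S l w) by (unfold S; lra).
    assert (hd : d l w <= 0).
    { destruct (Rle_or_lt (d l w) 0) as [h'|h']; auto.
      destruct (small_inv (c * d l w / 3)) as (N & hN).
      { unfold Rdiv. apply Rmult_lt_0_compat. nra. lra. }
      pose proof (C N _ (E (Datatypes.S N))).
      pose proof (C N _ (Strans _ _ _ (E (Datatypes.S N)) hS)).
      pose proof (met_tri d Hm l (u (Datatypes.S N)) w).
      rewrite (met_sym d Hm l (u (Datatypes.S N))) in H1.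
      assert (c * d l w <= c * (d (u (Datatypes.S N)) l + d (u (Datatypes.S N)) w)).
      { apply Rmult_le_compat_l; lra. } rewrite Rmult_plus_distr_l in H2.
      assert (0 < c * d l w) by nra. lra. }
    pose proof (met_pos d Hm l w).
    assert (l = w) by (apply (met_eq d Hm); lra). subst w.
    rewrite met_refl in h by auto. lra.
Qed.

Definition clamp (t : R) := Rmax 0 (Rmin 1 t).
Lemma clamp_in t : 0 <= clamp t <= 1.
Proof. unfold clamp, Rmax, Rmin. repeat destruct Rle_dec; lra. Qed.
Lemma clamp_id t : 0 <= t <= 1 -> clamp t = t.
Proof. unfold clamp, Rmax, Rmin. repeat destruct Rle_dec; lra. Qed.
Lemma clamp_lip s t : Rabs (clamp s - clamp t) <= Rabs (s - t).
Proof. unfold clamp, Rmax, Rmin, Rabs. repeat destruct Rle_dec; repeat destruct Rcase_abs; lra. Qed.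

Lemma path_point {Y} (d : Y->Y->R) (Hm : is_metric d) (p q : Y) (a th : R) :
  length_space d -> 0 < a < d p q -> 0 < th ->
  exists z', d p z' = a /\ d z' q <= d p q + th - a.
Proof.
  intros HL ha hth. destruct (HL p q th hth) as (g & gc & g0 & g1 & gl).
  set (h := fun t => d p (g (clamp t)) - a).
  assert (hc : continuity h).
  { intros x. unfold continuity_pt, continue_in, limit1_in, limit_in. simpl.
    intros eps he. pose proof (clamp_in x) as hx.
    destruct (gc (clamp x) hx eps he) as (del & hdel & Hd).
    exists del. split; [lra|]. intros s [_ hs]. unfold R_dist in *.
    pose proof (clamp_lip s x).
    specialize (Hd (clamp s) (clamp_in s) ltac:(lra)).
    unfold h. pose proof (met_tri d Hm p (g (clamp x)) (g (clamp s))) as T1.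
    pose proof (met_tri d Hm p (g (clamp s)) (g (clamp x))) as T2.
    rewrite (met_sym d Hm (g (clamp s))) in T2.
    unfold Rabs; destruct Rcase_abs; lra. }
  assert (h0 : h 0 < 0).
  { unfold h. rewrite clamp_id by lra. rewrite g0, met_refl by auto. lra. }
  assert (h1 : 0 < h 1).
  { unfold h. rewrite clamp_id by lra. rewrite g1. lra. }
  destruct (IVT h 0 1 hc Rlt_0_1 h0 h1) as (t & ht & hz).
  unfold h in hz. rewrite clamp_id in hz by lra.
  exists (g t). split; [lra|].
  specialize (gl [0; t; 1]).
  simpl in gl. rewrite g0, g1 in gl.
  assert (d p (g t) + (d (g t) q + 0) <= d p q + th).
  { apply gl.
    - apply Sorted_cons. apply Sorted_cons. apply Sorted_cons. apply Sorted_nil.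
      apply HdRel_nil. apply HdRel_cons; lra. apply HdRel_cons; lra.
    - repeat (apply Forall_cons; [lra|]). apply Forall_nil. }
  lra.
Qed.

Lemma fin_pos {A} (Q : A -> R -> Prop) (l : list A) :
  (forall a r r', 0 < r' <= r -> Q a r -> Q a r') ->
  (forall a, In a l -> exists r, 0 < r /\ Q a r) ->
  exists r, 0 < r /\ forall a, In a l -> Q a r.
Proof.
  intros Hd. induction l as [|a l IH]; intros H.
  - exists 1. split; [lra|]. intros a [].
  - destruct (H a (or_introl eq_refl)) as (r1 & h1 & q1).
    destruct IH as (r2 & h2 & q2). { intros b hb. apply H. right; auto. }
    exists (Rmin r1 r2). split. apply Rmin_pos; auto.
    intros b [e|hb].
    + subst b. apply (Hd a r1); auto. split. apply Rmin_pos; auto. apply Rmin_l.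
    + apply (Hd b r2); auto. split. apply Rmin_pos; auto. apply Rmin_r.
Qed.

Lemma fin_J {A} (P : A -> nat -> Prop) (l : list A) :
  (forall a, In a l -> exists J, forall j, (J <= j)%nat -> P a j) ->
  exists J, forall a, In a l -> forall j, (J <= j)%nat -> P a j.
Proof.
  induction l as [|a l IH]; intros H.
  - exists 0%nat. intros a [].
  - destruct (H a (or_introl eq_refl)) as (J1 & h1).
    destruct IH as (J2 & h2). { intros b hb. apply H. right; auto. }
    exists (max J1 J2). intros b [e|hb] j hj.
    + subst b. apply h1. lia.
    + apply h2; auto. lia.
Qed.

Lemma build {A B} (Rl : A -> B -> Prop) (l : list A) :
  (forall a, In a l -> exists b, Rl a b) -> exists l', Forall2 Rl l l'.
Proof.
  induction l as [|a l IH]; intros H.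
  - exists []. constructor.
  - destruct (H a (or_introl eq_refl)) as (b & hb).
    destruct IH as (l' & hl'). { intros c hc. apply H. right; auto. }
    exists (b :: l'). constructor; auto.
Qed.

Lemma f2_in {A B} (Rl : A -> B -> Prop) l l' : Forall2 Rl l l' ->
  forall b, In b l' -> exists a, In a l /\ Rl a b.
Proof.
  induction 1; intros c hc. destruct hc.
  destruct hc as [e|hc]. subst c. exists x; split; auto. left; auto.
  destruct (IHForall2 c hc) as (a & h1 & h2). exists a; split; auto. right; auto.
Qed.

Lemma nodup_f2 {A B} (Rl : A -> B -> Prop) l l' : Forall2 Rl l l' -> NoDup l ->
  (forall a1 a2 b, In a1 l -> In a2 l -> Rl a1 b -> Rl a2 b -> a1 = a2) -> NoDup l'.
Proof.
  induction 1; intros hn hi. constructor.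
  inversion hn; subst. constructor.
  - intros hy. destruct (f2_in _ _ _ H0 y hy) as (a & ha & hr).
    assert (x = a) by (apply (hi x a y); simpl; auto). subst. auto.
  - apply IHForall2; auto. intros a1 a2 b h1 h2. apply hi; simpl; auto.
Qed.

Lemma ptwise {X Y} dX dY (fs : nat -> X -> Y) f (HX : is_metric dX) :
  loc_unif_conv dX dY fs f -> forall y eps, 0 < eps ->
  exists J, forall j, (J <= j)%nat -> dY (fs j y) (f y) < eps.
Proof.
  intros H y eps he. destruct (H y) as (r & hr & Hr). destruct (Hr eps he) as (J & HJ).
  exists J. intros j hj. apply HJ; auto. rewrite met_refl; auto.
Qed.

Lemma L_pos {X Y} dX dY L (g : X -> Y) (x : X) : is_metric dX -> is_metric dY ->
  LQ_map dX dY L g -> 0 < L.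
Proof.
  intros HX HY HL. destruct (HL x 1 Rlt_0_1) as [_ H2]. specialize (H2 x).
  unfold ball in H2. rewrite !met_refl in H2 by auto. specialize (H2 Rlt_0_1). lra.
Qed.

Lemma lq_upper {M N} (dM : M -> M -> R) (dN : N -> N -> R) L fs f :
  is_metric dM -> is_metric dN -> (forall j, LQ_map dM dN L (fs j)) ->
  loc_unif_conv dM dN fs f -> forall x r y, 0 < r -> dM x y < r -> dN (f x) (f y) < L * r.
Proof.
  intros HM HN HL Hc x r y hr hy.
  pose proof (L_pos dM dN L (fs 0%nat) x HM HN (HL 0%nat)) as hL.
  pose proof (met_pos dM HM x y).
  set (r' := (dM x y + r) / 2).
  assert (hr' : 0 < r' < r) by (unfold r'; lra).
  assert (L * r' < L * r) by nra.
  set (e := (L * r - L * r') / 2).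
  assert (he : 0 < e) by (unfold e; lra).
  destruct (ptwise dM dN fs f HM Hc x e he) as (J1 & h1).
  destruct (ptwise dM dN fs f HM Hc y e he) as (J2 & h2).
  set (j := max J1 J2).
  specialize (h1 j (Nat.le_max_l _ _)). specialize (h2 j (Nat.le_max_r _ _)).
  destruct (HL j x r' (proj1 hr')) as [_ hu].
  assert (dN (fs j x) (fs j y) < L * r') by (apply hu; unfold ball, r'; lra).
  pose proof (met_tri dN HN (f x) (fs j x) (f y)) as T1.
  pose proof (met_tri dN HN (fs j x) (fs j y) (f y)) as T2.
  rewrite (met_sym dN HN (f x) (fs j x)) in T1. unfold e in *. lra.
Qed.

Lemma k_to_one {M N} (dM : M -> M -> R) (dN : N -> N -> R) Rad L k fs f :
  is_metric dM -> is_metric dN -> (forall j, LQ_map dM dN L (fs j)) ->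
  (forall j, unif_k_to_one dM Rad k (fs j)) ->
  loc_unif_conv dM dN fs f -> unif_k_to_one dM Rad k f.
Proof.
  intros HM HN HL HK Hc x l hnd hl.
  pose proof (L_pos dM dN L (fs 0%nat) x HM HN (HL 0%nat)) as hL.
  set (Q := fun y r => r < Rad - dM x y /\ forall y2, In y2 l -> y2 <> y -> 2 * r <= dM y y2).
  destruct (fin_pos Q l) as (r & hr & Hr).
  { intros a r1 r2 h [q1 q2]. split. lra. intros y2 i n. specialize (q2 y2 i n). lra. }
  { intros a ha. destruct (hl a ha) as [_ hb]. unfold ball in hb.
    destruct (fin_pos (fun y2 r => y2 <> a -> 2 * r <= dM a y2) l) as (r2 & h2 & H2).
    { intros b r1 r3 h q n. specialize (q n). lra. }
    { intros b hb'. destruct (classic (b = a)) as [e|n].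
      - exists 1. split. lra. intros n. contradiction.
      - exists (dM a b / 2). split.
        + pose proof (met_pos dM HM a b).
          assert (dM a b <> 0). { intro e. apply n. symmetry. apply (met_eq dM HM); auto. }
          lra.
        + intros _. lra. }
    exists (Rmin ((Rad - dM x a)/2) r2). split.
    - apply Rmin_pos; lra.
    - split.
      + pose proof (Rmin_l ((Rad - dM x a)/2) r2). lra.
      + intros y2 i n. specialize (H2 y2 i n). pose proof (Rmin_r ((Rad - dM x a)/2) r2). lra. }
  assert (he : 0 < / L * r / 2).
  { apply Rmult_lt_0_compat; [|lra]. apply Rmult_lt_0_compat; auto. apply Rinv_0_lt_compat; auto. }
  destruct (fin_J (fun y j => dN (fs j y) (f y) < / L * r / 2) l) as (J1 & h1).
  { intros a _. apply (ptwise dM dN fs f HM Hc a _ he). }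
  destruct (ptwise dM dN fs f HM Hc x _ he) as (J2 & h2).
  set (j := max J1 J2).
  specialize (h2 j (Nat.le_max_r _ _)).
  set (Rl := fun y w => dM y w < r /\ fs j w = fs j x).
  destruct (build Rl l) as (l' & hl').
  { intros a ha. destruct (HL j a r hr) as [hlo _].
    destruct (hlo (fs j x)) as (w & hw1 & hw2).
    - unfold ball. specialize (h1 a ha j (Nat.le_max_l _ _)).
      destruct (hl a ha) as [hfa _].
      pose proof (met_tri dN HN (fs j a) (f a) (fs j x)).
      rewrite hfa, (met_sym dN HN (f x)) in H. rewrite hfa in h1. lra.
    - exists w. split; auto. }
  rewrite (Forall2_length hl').
  apply (HK j x l').
  - apply (nodup_f2 Rl l l' hl' hnd).
    intros a1 a2 b i1 i2 [r1 _] [r2 _].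
    destruct (classic (a1 = a2)) as [e|n]; auto. exfalso.
    destruct (Hr a1 i1) as [_ q]. specialize (q a2 i2 (fun e => n (eq_sym e))).
    pose proof (met_tri dM HM a1 b a2). rewrite (met_sym dM HM b a2) in H. lra.
  - intros w hw. destruct (f2_in Rl l l' hl' w hw) as (a & ha & [hd hf]).
    split; auto. unfold ball. destruct (Hr a ha) as [q _].
    pose proof (met_tri dM HM x a w). lra.
Qed.

Lemma lq_lower {M N} (dM : M -> M -> R) (dN : N -> N -> R) L fs f :
  is_metric dM -> complete dM -> is_metric dN -> length_space dN ->
  (forall j, LQ_map dM dN L (fs j)) ->
  loc_unif_conv dM dN fs f -> continuous_map dM dN f ->
  forall x r, 0 < r -> forall z, ball dN (f x) (/ L * r) z -> exists y, ball dM x r y /\ f y = z.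
Proof.
  intros HM HMc HN HNl HL Hc Hf x r hr z hz. unfold ball in *.
  pose proof (L_pos dM dN L (fs 0%nat) x HM HN (HL 0%nat)) as hL.
  set (phi := fun w => dN (f w) z).
  assert (hpr : phi x / r < / L).
  { unfold Rdiv. apply Rmult_lt_reg_r with r; auto.
    rewrite Rmult_assoc, Rinv_l, Rmult_1_r by lra. unfold phi. lra. }
  pose proof (Rinv_0_lt_compat L hL) as hiL.
  assert (hp0 : 0 <= phi x) by (apply met_pos; auto).
  assert (hpr0 : 0 <= phi x / r) by (unfold Rdiv; apply Rmult_le_pos; auto; left; apply Rinv_0_lt_compat; auto).
  set (c := (/ L + phi x / r) / 2).
  assert (hc : 0 < c) by (unfold c; lra).
  assert (hcL : c * L < 1).
  { unfold c. assert (phi x / r * L < / L * L) by (apply Rmult_lt_compat_r; auto).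
    rewrite Rinv_l in H by lra.
    replace ((/ L + phi x / r) / 2 * L) with ((1 + phi x / r * L) / 2) by (field; lra). lra. }
  assert (hcr : phi x < c * r).
  { unfold c. assert (phi x / r * r = phi x) by (field; lra).
    assert (phi x / r * r < / L * r) by (apply Rmult_lt_compat_r; auto). nra. }
  destruct (ekeland dM phi c x HM HMc hc) as (ys & hy1 & hy2).
  { intros y. apply met_pos; auto. }
  { intros y eps he. destruct (Hf y eps he) as (del & hd & Hd). exists del. split; auto.
    intros w hw. specialize (Hd w hw). unfold phi.
    pose proof (met_tri dN HN (f y) (f w) z). pose proof (met_tri dN HN (f w) (f y) z).
    rewrite (met_sym dN HN (f w) (f y)) in H0. unfold Rabs; destruct Rcase_abs; lra. }
  exists ys. split.
  { assert (c * dM x ys < c * r) by (pose proof (met_pos dN HN (f ys) z); fold (phi ys) in H; lra).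
    apply Rmult_lt_reg_l with c; auto. }
  assert (hd0 : 0 <= phi ys) by (apply met_pos; auto).
  destruct (Req_dec (phi ys) 0) as [e|ne].
  { apply (met_eq dN HN). exact e. }
  exfalso. set (delta := phi ys). assert (hdl : 0 < delta) by (unfold delta; lra).
  destruct (Hc ys) as (rho & hrho & Hrho).
  set (cL := c * L). set (a := Rmin (delta / 2) (rho / (2 * L))).
  assert (ha : 0 < a).
  { apply Rmin_pos. lra. unfold Rdiv. apply Rmult_lt_0_compat; auto. apply Rinv_0_lt_compat. lra. }
  assert (ha1 : a <= delta / 2) by apply Rmin_l.
  assert (ha2 : L * a <= rho / 2).
  { assert (a <= rho / (2 * L)) by apply Rmin_r.
    assert (L * a <= L * (rho / (2 * L))) by (apply Rmult_le_compat_l; lra).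
    assert (L * (rho / (2 * L)) = rho / 2) by (field; lra). lra. }
  assert (hcL0 : 0 < cL) by (unfold cL; apply Rmult_lt_0_compat; auto).
  set (eps := (1 - cL) * a / 4).
  assert (hcL1 : cL < 1) by (unfold cL; lra).
  assert (heps : 0 < eps).
  { unfold eps. assert (0 < (1 - cL) * a) by (apply Rmult_lt_0_compat; lra). lra. }
  assert (heps2 : eps <= a / 4).
  { unfold eps. assert ((1 - cL) * a <= a) by nra. lra. }
  destruct (path_point dN HN (f ys) z a eps HNl) as (z' & hz1 & hz2).
  { fold (phi ys). fold delta. lra. } { auto. }
  fold (phi ys) in hz2. fold delta in hz2.
  destruct (Hrho eps heps) as (J & HJ).
  specialize (HJ J (Nat.le_refl _)).
  assert (hR1 : 0 < L * (a + 2 * eps)) by nra.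
  destruct (HL J ys _ hR1) as [hlo _].
  destruct (hlo z') as (w & hw1 & hw2).
  { unfold ball. replace (/ L * (L * (a + 2 * eps))) with (a + 2 * eps) by (field; lra).
    pose proof (met_tri dN HN (fs J ys) (f ys) z').
    assert (dN (fs J ys) (f ys) < eps) by (apply HJ; rewrite met_refl; auto). lra. }
  unfold ball in hw1.
  assert (hw3 : dN (fs J w) (f w) < eps).
  { apply HJ. assert (L * (a + 2 * eps) <= 3 * rho / 4) by nra. lra. }
  rewrite hw2 in hw3.
  specialize (hy2 w). unfold phi in hy2.
  pose proof (met_tri dN HN (f w) z' z).
  rewrite (met_sym dN HN (f w) z') in H.
  assert (c * dM ys w < c * (L * (a + 2 * eps))) by (apply Rmult_lt_compat_l; auto).
  replace (c * (L * (a + 2 * eps))) with (cL * a + 2 * (cL * eps)) in H0 by (unfold cL; ring).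
  assert (cL * eps < eps) by nra.
  assert (eps * 4 = a - cL * a) by (unfold eps; field).
  fold (phi ys) in hy2. fold delta in hy2. lra.
Qed.

Theorem theorem1p2 (n : nat) (M N : Type) (dM : M -> M -> R) (dN : N -> N -> R)
  (Rad L : R) (k : nat) (fs : nat -> M -> N) (f : M -> N) :
  bounded_geometry dM n -> bounded_geometry dN n ->
  (forall j, unif_k_to_one dM Rad k (fs j)) ->
  (forall j, LQ_map dM dN L (fs j)) ->
  loc_unif_conv dM dN fs f ->
  continuous_map dM dN f ->
  unif_k_to_one dM Rad k f /\ LQ_map dM dN L f.
Proof.
  intros (HM & HMc & _ & _) (HN & _ & HNl & _) HK HL Hc Hf. split.
  - apply (k_to_one dM dN Rad L k fs f); auto.
  - intros x r hr. split.
    + apply (lq_lower dM dN L fs f); auto.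
    + intros y hy. unfold ball in *. apply (lq_upper dM dN L fs f); auto.
Qed.
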